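(* Let $g,h\in G_n$ be such that $g$, $h$, $gh$ have modified types $\boldsymbol\lambda,\boldsymbol\mu,\boldsymbol\nu$ respectively, and suppose $\|\boldsymbol\nu\|=\|\boldsymbol\lambda\|+\|\boldsymbol\mu\|$. Set $k=\|\boldsymbol\nu\|+\ell(\boldsymbol\nu^e)$. Then there exist $z\in G_n$ and $\bar g,\bar h\in G_k$ such that $$zgz^{-1}=\begin{bmatrix}\bar g&0\\0&I_{n-k}\end{bmatrix},\quad zhz^{-1}=\begin{bmatrix}\bar h&0\\0&I_{n-k}\end{bmatrix},\quad zghz^{-1}=\begin{bmatrix}\bar g\bar h&0\\0&I_{n-k}\end{bmatrix}.$$
   Context: $q$ is a prime power, $G_n=GL_n(\mathbb F_q)$. $\Phi$ is the set of monic irreducible polynomials in $\mathbb F_q[t]$ other than $t$, $d(f)$ its degree; $\mathcal{P}(\Phi)$ is the set of finitely supported maps $\boldsymbol\lambda$ from $\Phi$ to partitions, $\|\boldsymbol\lambda\|=\sum_f d(f)|\boldsymbol\lambda(f)|$, $\boldsymbol\lambda^e=\boldsymbol\lambda(t-1)$, $\ell$ = number of nonzero parts. The type of $g\in G_n$ is the $\boldsymbol\lambda$ with $\mathbb F_q^n\cong\bigoplus_{f,i}\mathbb F_q[t]/(f^{\boldsymbol\lambda_i(f)})$ as $\mathbb F_q[t]$-modules ($t$ acting by $g$). The modified type of $g$ is $\mathring{\boldsymbol\lambda}$ with $\mathring{\boldsymbol\lambda}(f)=\boldsymbol\lambda(f)$ for $f\ne t-1$ and $\mathring{\boldsymbol\lambda}(t-1)=(\boldsymbol\lambda^e_1-1,\dots,\boldsymbol\lambda^e_r-1)$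 (zero parts discarded), $r=\ell(\boldsymbol\lambda^e)$. *)

(* Defs.v *)
From HB Require Import structures.
From mathcomp Require Import all_boot all_order all_algebra.
Set Implicit Arguments. Unset Strict Implicit. Unset Printing Implicit Defensive.
Import Order.TTheory GRing.Theory Num.Theory.
Local Open Scope ring_scope.

(* A finitely supported map Phi -> partitions, represented by its (finite)
   graph: a list of pairs (f, partition) with distinct keys f. *)
Definition ptype (F : finFieldType) := seq ({poly F} * seq nat).

Definition pt_at (F : finFieldType) (lam : ptype F) (f : {poly F}) : seq nat :=
  \big[cat/[::]]_(x <- lam | x.1 == f) x.2.

Definition wf_ptype (F : finFieldType) (lam : ptype F) : Prop :=
  uniq (map fst lam) /\
  forall x, x \in lam ->
    [/\ x.1 \is monic, irreducible_poly x.1, x.1 != 'X,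
        sorted geq x.2 & all (fun i => 0 < i)%N x.2].

Definition elem_divs (F : finFieldType) (lam : ptype F) : seq {poly F} :=
  flatten [seq [seq x.1 ^+ m | m <- x.2] | x <- lam].

(* lam is the type of g : F_q^n = (+)_{f,i} F_q[t]/(f^{lam_i(f)}) with t acting
   by g; equivalently g is similar to the block diagonal matrix of the
   companion matrices of the f^{lam_i(f)} (the matrix of t on F_q[t]/(f^m)). *)
Definition is_type (F : finFieldType) (n : nat) (g : 'M[F]_n) (lam : ptype F)
  : Prop :=
  wf_ptype lam /\
  let es := elem_divs lam in
  exists (e : (\sum_(i < size es) (size (nth 0%R es i)).-1)%N = n),
  exists P : 'M[F]_n, P \in unitmx /\
    g = invmx P *m castmx (e, e)
          (\mxdiag_(i < size es) companionmx (nth 0%R es i : seq F)) *m P.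

Definition modify (F : finFieldType) (lam : ptype F) : ptype F :=
  [seq (x.1, if x.1 == 'X - 1 then [seq i.-1 | i <- x.2 & (1 < i)%N] else x.2)
  | x <- lam].

Definition pnorm (F : finFieldType) (lam : ptype F) : nat :=
  (\sum_(x <- lam) (size x.1).-1 * sumn x.2)%N.

Definition ell_e (F : finFieldType) (lam : ptype F) : nat :=
  count (fun i => 0 < i)%N (pt_at lam ('X - 1)).

(* block matrix [[A, 0], [0, I_{n-k}]] of size n (meaningful for k <= n) *)
Definition embed_mx (F : finFieldType) (k n : nat) (A : 'M[F]_k) : 'M[F]_n :=
  \matrix_(i < n, j < n)
    match (insub (i : nat) : option 'I_k), (insub (j : nat) : option 'I_k) with
    | Some i', Some j' => A i' j'
    | _, _ => ((i : nat) == j)%:R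
    end.

(* Main.v *)
Require Import Defs.
From HB Require Import structures.
From mathcomp Require Import all_boot all_order all_algebra.
From mathcomp Require Import zify.
Set Implicit Arguments. Unset Strict Implicit. Unset Printing Implicit Defensive.
Import Order.TTheory GRing.Theory Num.Theory.
Local Open Scope ring_scope.


Lemma char_poly_horner (R : comNzRingType) d (A : 'M[R]_d) x :
  (char_poly A).[x] = \det (x%:M - A).
Proof.
rewrite /char_poly.
have -> : (\det (char_poly_mx A)).[x] = horner_eval x (\det (char_poly_mx A)) by [].
rewrite -det_map_mx; congr (\det _).
apply/matrixP => i j; rewrite !mxE /=.
rewrite [LHS]/horner_eval.
by rewrite hornerD hornerN hornerMn hornerX hornerC.
Qed.

Lemma mxdiag_mul (R : pzRingType) p (p_ : 'I_p -> nat)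
  (X Y : forall i, 'M[R]_(p_ i)) :
  \mxdiag_i X i *m \mxdiag_i Y i = \mxdiag_i (X i *m Y i).
Proof.
rewrite [X in _ *m X]/mxdiag mul_mxdiag_mxblock /mxdiag.
apply/eq_mxblockP => i j.
case: (eqVneq i j) => [<-|ne]; first by rewrite !conform_mx_id.
by rewrite mulmx0.
Qed.

Lemma irr_root1 (F : fieldType) (f : {poly F}) :
  f \is monic -> irreducible_poly f -> f != 'X - 1 -> f.[1] != 0.
Proof.
move=> fm [_ fi] fne; apply/negP => /eqP r.
have : root f 1 by apply/rootP.
rewrite root_factor_theorem => dv.
have := fi _ _ dv; rewrite size_XsubC => /(_ isT).
by rewrite eqp_monic ?monicXsubC // polyC1 eq_sym (negPf fne).
Qed.

Lemma blk_gen (F : fieldType) d (C : 'M[F]_d) (f : {poly F}) m :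
  f \is monic -> irreducible_poly f -> f != 'X - 1 -> char_poly C = f ^+ m ->
  \rank (C - 1%:M) = d /\ \rank ((C - 1%:M) *m (C - 1%:M)) = d.
Proof.
move=> fm fi fne cp.
have h1 : (1%:M - C) \in unitmx.
  rewrite unitmxE unitfE -char_poly_horner cp horner_exp.
  by rewrite expf_neq0 // irr_root1.
have e : C - 1%:M = - (1%:M - C) by rewrite opprB.
rewrite e mulNmx mulmxN opprK !(eqmx_opp _).
by rewrite !mxrank_unit ?unitmx_mul ?h1.
Qed.


Lemma nil_rank (F : fieldType) d (N : 'M[F]_d.+1) :
  N ^+ d.+1 = 0 -> N ^+ d != 0 ->
  forall j, (j <= d.+1)%N -> \rank (N ^+ j) = (d.+1 - j)%N.
Proof.
move=> Nm Nd.
have mono : forall j, (\rank (N ^+ j.+1) <= \rank (N ^+ j))%N.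
  by move=> j; rewrite exprS -mulmxE mxrankM_maxr.
have stab : forall j, \rank (N ^+ j.+1) = \rank (N ^+ j) ->
    forall t, (N ^+ (j + t) :=: N ^+ j)%MS.
  move=> j ej.
  have sub : (N ^+ j.+1 <= N ^+ j)%MS by rewrite exprS -mulmxE submxMl.
  have e1 : (N ^+ j.+1 :=: N ^+ j)%MS.
    apply/eqmxP; rewrite sub /=.
    by have [_ <-] := mxrank_leqif_sup sub; rewrite ej.
  elim=> [|t IH]; first by rewrite addn0; exact: eqmx_refl.
  rewrite addnS exprSr -mulmxE.
  apply: eqmx_trans (eqmxMr N IH) _.
  by rewrite mulmxE -exprSr.
have strict : forall j, (j < d.+1)%N -> (\rank (N ^+ j.+1) < \rank (N ^+ j))%N.
  move=> j lt; rewrite ltn_neqAle mono andbT; apply/negP => /eqP ej.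
  have h1 : \rank (N ^+ (j + (d - j))) = \rank (N ^+ j) by rewrite (stab j ej (d - j)%N).
  have h2 : \rank (N ^+ (j + (d.+1 - j))) = \rank (N ^+ j) by rewrite (stab j ej (d.+1 - j)%N).
  move: h1 h2; rewrite subnKC // subnKC 1?ltnW // Nm mxrank0 => h1 h2.
  by move: Nd; rewrite -mxrank_eq0 h1 -h2.
have up : forall j, (j <= d.+1)%N -> (\rank (N ^+ j) <= d.+1 - j)%N.
  elim=> [|j IH] lt; first by rewrite expr0 subn0 rank_leq_row.
  have := strict j lt; have := IH (ltnW lt); lia.
have lo : forall t, (t <= d.+1)%N -> (t <= \rank (N ^+ (d.+1 - t)))%N.
  elim=> [|t IH] lt //.
  have := strict (d - t)%N; have := IH (ltnW lt).
  have -> : (d - t).+1 = (d.+1 - t)%N by lia.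
  have -> : (d.+1 - t.+1)%N = (d - t)%N by lia.
  move=> h1 h2; have := h2 ltac:(lia); lia.
move=> j lj; apply/eqP; rewrite eqn_leq up //=.
have := lo (d.+1 - j)%N; have -> : (d.+1 - (d.+1 - j))%N = j by lia.
by move=> /(_ ltac:(lia)).
Qed.


Lemma e0_pow (F : fieldType) d (C : 'M[F]_d.+1) :
  (forall (i j : 'I_d.+1), (i.+1 < d.+1)%N -> C i j = (i.+1 == j)%:R) ->
  forall i, (i <= d)%N -> delta_mx 0 0 *m C ^+ i = delta_mx 0 (inord i) :> 'rV_d.+1.
Proof.
move=> sh; elim=> [|i IH] lt.
  rewrite expr0 mulmx1; congr delta_mx; apply/val_inj; by rewrite /= inordK.
rewrite exprSr -mulmxE mulmxA IH 1?ltnW // -rowE; apply/rowP => j.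
rewrite !mxE eqxx andTb sh; last by rewrite inordK // ltnW.
rewrite inordK; last exact: ltnW.
by rewrite -val_eqE /= inordK ?ltnS // eq_sym.
Qed.


Lemma e0_horner (F : fieldType) d (C : 'M[F]_d.+1) (q : {poly F}) :
  (forall (i j : 'I_d.+1), (i.+1 < d.+1)%N -> C i j = (i.+1 == j)%:R) ->
  (size q <= d.+1)%N ->
  ((delta_mx 0 0 : 'rV_d.+1) *m horner_mx C q) 0 ord_max = q`_d.
Proof.
move=> sh sq.
have eq : q = \poly_(i < d.+1) q`_i.
  apply/polyP => k; rewrite coef_poly; case: ifP => // /negbT.
  by rewrite -leqNgt => lk; rewrite nth_default // (leq_trans sq).
rewrite [in LHS]eq poly_def rmorph_sum mulmx_sumr summxE big_ord_recr /=.
have term : forall i, (i <= d)%N ->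
    (('e_0 : 'rV_d.+1) *m horner_mx C (q`_i *: 'X^i)) 0 ord_max = q`_i * (i == d)%:R.
  move=> i li.
  rewrite horner_mxZ rmorphXn /= horner_mx_X -scalemxAr e0_pow // !mxE eqxx andTb.
  by rewrite -val_eqE /= inordK // eq_sym.
rewrite big1 ?add0r => [|i _]; first by rewrite term // eqxx mulr1.
by rewrite term ?(ltnW (ltn_ord i)) // ltn_eqF ?mulr0.
Qed.


Lemma blk_one (F : fieldType) d (C : 'M[F]_d) m :
  char_poly C = ('X - 1) ^+ m ->
  (forall (i j : 'I_d), (i.+1 < d)%N -> C i j = (i.+1 == j)%:R) ->
  \rank (C - 1%:M) = m.-1 /\ \rank ((C - 1%:M) *m (C - 1%:M)) = m.-2.
Proof.
move=> cp sh.
have dm : d = m.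
  by have := size_char_poly C; rewrite cp -polyC1 size_exp_XsubC; case.
subst m; case: d C cp sh => [|d] C cp sh.
  by split; apply/eqP; rewrite -leqn0 rank_leq_row.
set N := C - 1%:M.
have hN : forall j, horner_mx C (('X - 1) ^+ j) = N ^+ j.
  by move=> j; rewrite rmorphXn rmorphB /= horner_mx_X rmorph1.
have Nm : N ^+ d.+1 = 0 by rewrite -hN -cp Cayley_Hamilton.
have Nd : N ^+ d != 0.
  apply/negP => /eqP e.
  have sq : (size (('X - 1) ^+ d : {poly F}) <= d.+1)%N.
    by rewrite -polyC1 size_exp_XsubC.
  have := e0_horner sh sq; rewrite hN e mulmx0 mxE.
  have : lead_coef (('X - 1) ^+ d : {poly F}) = 1.
    by apply/eqP; apply: monic_exp; rewrite -polyC1 monicXsubC.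
  rewrite lead_coefE -polyC1 size_exp_XsubC /= => ->.
  by move/eqP; rewrite eq_sym oner_eq0.
have r := nil_rank Nm Nd.
split; first by have := r 1%N isT; rewrite expr1 subn1.
have [d0|dpos] := posnP d.
  subst d; move: Nm; rewrite expr1 => ->; by rewrite mulmx0 mxrank0.
by have := r 2%N dpos; rewrite expr2 mulmxE => ->; rewrite subn2.
Qed.


Lemma blk (F : fieldType) (f : {poly F}) m :
  f \is monic -> irreducible_poly f ->
  \rank (companionmx (f ^+ m : seq F) - 1%:M) =
    (if (f == 'X - 1)%R then m.-1 else (size f).-1 * m)%N /\
  (\rank ((companionmx (f ^+ m : seq F) - 1%:M) *m (companionmx (f ^+ m : seq F) - 1%:M))
    + ((f == 'X - 1)%R && (1 < m)%N))%N = \rank (companionmx (f ^+ m : seq F) - 1%:M).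
Proof.
move=> fm fi.
have cp : char_poly (companionmx (f ^+ m : seq F)) = f ^+ m.
  by rewrite companionmxK // monic_exp.
have sh : forall (i j : 'I_(size (f ^+ m)).-1), (i.+1 < (size (f ^+ m)).-1)%N ->
    companionmx (f ^+ m : seq F) i j = (i.+1 == j)%:R.
  move=> i j lt; rewrite mxE ifF //; apply/negbTE.
  by rewrite neq_ltn; apply/orP; left; rewrite -ltnS (leq_trans lt) // leqSpred.
case: eqP => [ef|nef].
  subst f; have [-> ->] := blk_one cp sh.
  split => //; case: m {cp sh} => [|[|m]] /=.
  + exact: erefl.
  + exact: erefl.
  + by rewrite addn1.
have [-> ->] := blk_gen fm fi (introN eqP nef) cp.
by rewrite size_exp addn0.
Qed.


Lemma sum_es (F : finFieldType) (lam : ptype F) (G : {poly F} -> nat) :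
  (\sum_(i < size (elem_divs lam)) G (nth 0%R (elem_divs lam) i))%N =
  (\sum_(x <- lam) \sum_(m <- x.2) G (x.1 ^+ m))%N.
Proof.
rewrite -(big_mkord xpredT (fun i => G (nth 0%R (elem_divs lam) i))).
rewrite -(big_nth 0 xpredT G) /elem_divs big_flatten /= big_map.
by apply: eq_bigr => x _; rewrite big_map.
Qed.

Lemma sum_pnorm (F : finFieldType) (lam : ptype F) :
  pnorm (modify lam) =
  (\sum_(x <- lam) \sum_(m <- x.2)
     (if (x.1 == 'X - 1)%R then m.-1 else (size x.1).-1 * m))%N.
Proof.
rewrite /pnorm /modify big_map; apply: eq_bigr => x _ /=.
case: eqP => [->|_].
  rewrite -polyC1 size_XsubC /= mul1n.
  by elim: x.2 => [|a s IH]; rewrite ?big_nil // big_cons /=; case: ltnP => /= ha;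
    rewrite IH //; case: a ha => [|[|a]].
by elim: x.2 => [|a s IH]; rewrite ?big_nil ?muln0 // big_cons /= mulnDr IH.
Qed.

Lemma sum_ell (F : finFieldType) (lam : ptype F) :
  ell_e (modify lam) =
  (\sum_(x <- lam) \sum_(m <- x.2) ((x.1 == 'X - 1)%R && (1 < m)%N))%N.
Proof.
rewrite /ell_e /pt_at (big_morph (count (fun i : nat => 0 < i)%N) (count_cat _) (erefl : count _ [::] = 0%N)) /modify big_map /=.
rewrite big_mkcond; apply: eq_bigr => x _ /=.
case E : (x.1 == 'X - 1)%R => /=.
  by elim: x.2 => [|a s IH]; rewrite ?big_nil // big_cons /=; case: ltnP => /= ha;
    rewrite IH //; case: a ha => [|[|a]].
by rewrite big1.
Qed.

Lemma type_rank (F : finFieldType) n (g : 'M[F]_n) lam :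
  is_type g lam ->
  \rank (g - 1%:M) = pnorm (modify lam) /\
  (\rank ((g - 1%:M) *m (g - 1%:M)) + ell_e (modify lam))%N = \rank (g - 1%:M).
Proof.
case=> [[_ wf]] /= [e [P [Pu ->]]].
have sim : forall X : 'M[F]_n, \rank (invmx P *m X *m P) = \rank X.
  move=> X; rewrite mxrankMfree ?row_free_unit //.
  by rewrite (eqmxMfull X _) // row_full_unit unitmx_inv.
set M := castmx _ _.
have e1 : invmx P *m M *m P - 1%:M = invmx P *m (M - 1%:M) *m P.
  by rewrite mulmxBr mulmxBl mulmx1 mulVmx.
have e2 : forall X Y : 'M[F]_n,
    (invmx P *m X *m P) *m (invmx P *m Y *m P) = invmx P *m (X *m Y) *m P.
  by move=> X Y; rewrite !mulmxA mulmxK // -(mulmxA (invmx P) X Y).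
rewrite e1 e2 !sim {e1 e2 sim}.
rewrite /M {M}; move: P Pu; clear g; case: n / e => P Pu; rewrite castmx_id.
have eD : forall (C : forall i : 'I_(size (elem_divs lam)), 'M[F]_((size ((elem_divs lam)`_i)%R).-1)),
  \mxdiag_i C i - 1%:M = \mxdiag_i (C i - 1%:M).
  by move=> C; rewrite mxdiagB mxdiagZ.
rewrite eD mxdiag_mul !rank_mxdiag.
rewrite (sum_es lam (fun p => \rank (companionmx (p : seq F) - 1%:M))).
rewrite (sum_es lam (fun p => \rank ((companionmx (p : seq F) - 1%:M) *m (companionmx (p : seq F) - 1%:M)))).
rewrite sum_pnorm sum_ell -big_split /=.
split; apply: eq_big_seq => x /wf [xm xi _ _ _].
  by apply: eq_bigr => m _; have [-> _] := blk m xm xi.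
rewrite -big_split /=; apply: eq_bigr => m _.
by have [_ ->] := blk m xm xi.
Qed.


Lemma core_b1 (F : fieldType) n (g h : 'M[F]_n) :
  \rank (g *m h - 1%:M) = (\rank (g - 1%:M)%R + \rank (h - 1%:M)%R)%N ->
  exists V : 'M[F]_n, exists U : 'M[F]_n,
    [/\ (\rank V + \rank ((g *m h - 1%:M) *m (g *m h - 1%:M))%R = 2 * \rank (g *m h - 1%:M)%R)%N,
        (\rank V + \rank U = n)%N, row_full (V + U)%MS &
     [/\ (V *m g <= V)%MS, (V *m h <= V)%MS, U *m g = U & U *m h = U]].
Proof.
set A := g - 1%:M; set B := h - 1%:M; set N := g *m h - 1%:M => hr.
have eN : N = A + g *m B by rewrite /N /A /B mulmxBr mulmx1 [RHS]addrC addrA subrK.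
have sNAB : (N <= A + B)%MS by rewrite eN addmx_sub_adds ?submx_refl ?submxMl.
have hAB := mxrank_sum_cap A B.
have hABr : (\rank (A + B)%MS <= \rank A + \rank B)%N := mxrank_adds_leqif A B.
have hNr := mxrankS sNAB.
have cap0 : (A :&: B)%MS = 0 by apply/eqP; rewrite -mxrank_eq0; lia.
have sABN : (A + B <= N)%MS.
  by have [_ <-] := mxrank_leqif_sup sNAB; apply/eqP; lia.
have sAN : (A <= N)%MS := submx_trans (addsmxSl A B) sABN.
have sBN : (B <= N)%MS := submx_trans (addsmxSr A B) sABN.
set K := kermx N.
have KN : K *m N = 0 := mulmx_ker N.
have KA : K *m A = 0.
  apply/eqP; rewrite -submx0 -cap0 sub_capmx submxMl /=.
  have -> : K *m A = - (K *m g *m B).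
    by apply/eqP; rewrite -subr_eq0 opprK -mulmxA -mulmxDr -eN KN.
  by rewrite (eqmx_opp (K *m g *m B)) submxMl.
have gA : g = A + 1%:M by rewrite /A subrK.
have hB : h = B + 1%:M by rewrite /B subrK.
have Kg : K *m g = K by rewrite gA mulmxDr KA mulmx1 add0r.
have KB : K *m B = 0.
  by apply/eqP; move/eqP: KN; rewrite eN mulmxDr KA add0r mulmxA Kg.
have Kh : K *m h = K by rewrite hB mulmxDr KB mulmx1 add0r.
set U := (K :\: N)%MS.
set W := ((N + K)%MS)^C%MS.
set V := (N + W)%MS.
exists V, U.
have hUK : (U <= K)%MS := diffmxSl K N.
have [DU eU] := submxP hUK.
have rK := mxrank_ker N.
have rNK := mxrank_sum_cap N K.
have rNN := mxrank_mul_ker N N.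
have rW : \rank W = (n - \rank (N + K)%MS)%N := mxrank_compl _.
have rNKle := rank_leq_col (N + K)%MS.
have rNle := rank_leq_row N.
have rV : (\rank V <= \rank N + \rank W)%N := mxrank_adds_leqif N W.
have rUC := mxrank_sum_cap U (K :&: N)%MS.
rewrite -/K in rNN rNK.
have eUC : \rank (U + (K :&: N))%MS = \rank K by rewrite (addsmx_diff_cap_eq K N).
have UC0 : \rank (U :&: (K :&: N))%MS = 0%N.
  apply/eqP; rewrite mxrank_eq0 -submx0 -(capmx_diff K N).
  by rewrite capmxS ?submx_refl ?capmxSr.
have cKN : \rank (K :&: N)%MS = \rank (N :&: K)%MS by rewrite capmxC.
rewrite -/K in rK.
have full : row_full (V + U)%MS.
  have sVVU : (V <= V + U)%MS := addsmxSl V U.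
  have sNV : (N <= V + U)%MS := submx_trans (addsmxSl N W) sVVU.
  have sWV : (W <= V + U)%MS := submx_trans (addsmxSr N W) sVVU.
  have sKV : (K <= V + U)%MS.
    rewrite -{1}(addsmx_diff_cap_eq K N) addsmx_sub addsmxSr /=.
    exact: submx_trans (capmxSr K N) sNV.
  have sub : ((N + K) + W <= V + U)%MS by rewrite !addsmx_sub sNV sKV sWV.
  have := addsmx_compl_full (N + K)%MS; rewrite /row_full => /eqP e.
  have := mxrankS sub; rewrite e => h1.
  by rewrite /row_full eqn_leq rank_leq_col h1.
have rVU : (\rank (V + U)%MS <= \rank V + \rank U)%N := mxrank_adds_leqif V U.
have rfull : \rank (V + U)%MS = n by apply/eqP.
split => //; last split.
all: try lia.
- change (V *m g <= V)%MS; rewrite gA mulmxDr mulmx1 addmx_sub ?submx_refl //.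
  apply: submx_trans (submxMl _ _) _; exact: submx_trans sAN (addsmxSl _ _).
- change (V *m h <= V)%MS; rewrite hB mulmxDr mulmx1 addmx_sub ?submx_refl //.
  apply: submx_trans (submxMl _ _) _; exact: submx_trans sBN (addsmxSl _ _).
- by rewrite eU -mulmxA Kg.
- by rewrite eU -mulmxA Kh.
Qed.


Lemma embed_block (F : finFieldType) k m (A : 'M[F]_k) :
  embed_mx (k + m) A = block_mx A 0 0 1%:M.
Proof.
apply/matrixP => i j; rewrite mxE.
rewrite -[i]splitK -[j]splitK.
case: (split i) => i'; case: (split j) => j'.
- by rewrite block_mxEul /= !valK.
- rewrite block_mxEur /= valK insubN ?mxE //=; last by rewrite -ltnNge leq_addr.
  by rewrite ltn_eqF // (leq_trans (ltn_ord i')) // leq_addr.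
- rewrite block_mxEdl /= insubN ?mxE //=; last by rewrite -ltnNge leq_addr.
  by rewrite gtn_eqF // (leq_trans (ltn_ord j')) // leq_addr.
- rewrite block_mxEdr /= insubN ?mxE //=; last by rewrite -ltnNge leq_addr.
  by rewrite eqn_add2l.
Qed.

Lemma ex_basis (F : fieldType) r n (V : 'M[F]_(r, n)) k :
  \rank V = k -> exists Vb : 'M[F]_(k, n), (Vb == V)%MS.
Proof. by move=> <-; exists (row_base V); apply/eqmxP; exact: eq_row_base. Qed.

Lemma core_b2 (F : finFieldType) n k m (g h : 'M[F]_n) (V U : 'M[F]_n) :
  n = (k + m)%N -> \rank V = k -> \rank U = m -> row_full (V + U)%MS ->
  (V *m g <= V)%MS -> (V *m h <= V)%MS -> U *m g = U -> U *m h = U -> g \in unitmx -> h \in unitmx ->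
  exists (z : 'M[F]_n) (gb hb : 'M[F]_k),
    [/\ z \in unitmx, gb \in unitmx & hb \in unitmx] /\
    [/\ z *m g *m invmx z = embed_mx n gb,
        z *m h *m invmx z = embed_mx n hb &
        z *m (g *m h) *m invmx z = embed_mx n (gb *m hb)].
Proof.
move=> en; subst n => rV rU fVU Vg Vh Ug Uh gu hu.
have [Vb /eqmxP eV] := ex_basis rV.
have [Ub /eqmxP eU] := ex_basis rU.
pose z := col_mx Vb Ub.
have zu : z \in unitmx.
  by rewrite -row_full_unit /row_full /z -addsmxE (adds_eqmx eV eU).
have Vbg : (Vb *m g <= Vb)%MS by rewrite eV (eqmxMr g eV).
have Vbh : (Vb *m h <= Vb)%MS by rewrite eV (eqmxMr h eV).
have [DU eDU] : exists D, Ub = D *m U.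
  by apply/submxP; rewrite eU submx_refl.
have Ubg : Ub *m g = Ub by rewrite eDU -mulmxA Ug.
have Ubh : Ub *m h = Ub by rewrite eDU -mulmxA Uh.
pose gb := Vb *m g *m pinvmx Vb.
pose hb := Vb *m h *m pinvmx Vb.
have zg : z *m g = block_mx gb 0 0 1%:M *m z.
  by rewrite /z mul_col_mx mul_block_col !mul0mx mul1mx !add0r addr0 mulmxKpV // Ubg.
have zh : z *m h = block_mx hb 0 0 1%:M *m z.
  by rewrite /z mul_col_mx mul_block_col !mul0mx mul1mx !add0r addr0 mulmxKpV // Ubh.
have ezg : z *m g *m invmx z = block_mx gb 0 0 1%:M by rewrite zg mulmxK.
have ezh : z *m h *m invmx z = block_mx hb 0 0 1%:M by rewrite zh mulmxK.
have blk_unit : forall (c : 'M[F]_k), block_mx c 0 0 (1%:M : 'M[F]_m) \in unitmx -> c \in unitmx.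
  by move=> c; rewrite !unitmxE det_ublock det1 mulr1.
exists z, gb, hb; split; first split => //.

- by apply: blk_unit; rewrite -ezg !unitmx_mul zu unitmx_inv zu andbT.
- by apply: blk_unit; rewrite -ezh !unitmx_mul zu unitmx_inv zu andbT.
rewrite !embed_block; split => //.
rewrite (mulmxA z g h) zg -(mulmxA _ z h) zh (mulmxA _ _ z) mulmxK // mulmx_block.
by rewrite !(mulmx0, mul0mx, addr0, add0r, mulmx1).
Qed.

Unset Implicit Arguments.

Theorem proposition3p3 (F : finFieldType) (n : nat) (g h : 'M[F]_n)
    (lam mu nu : ptype F) :
  g \in unitmx -> h \in unitmx ->
  is_type g lam -> is_type h mu -> is_type (g *m h) nu ->
  pnorm (modify nu) = (pnorm (modify lam) + pnorm (modify mu))%N ->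
  let k := (pnorm (modify nu) + ell_e (modify nu))%N in
  (k <= n)%N /\
  exists (z : 'M[F]_n) (gb hb : 'M[F]_k),
    [/\ z \in unitmx, gb \in unitmx & hb \in unitmx] /\
    [/\ z *m g *m invmx z = embed_mx n gb,
        z *m h *m invmx z = embed_mx n hb &
        z *m (g *m h) *m invmx z = embed_mx n (gb *m hb)].
Proof.
move=> gu hu tg th tgh hn k.
have [rg _] := type_rank tg.
have [rh _] := type_rank th.
have [rgh rgh2] := type_rank tgh.
have hr : \rank (g *m h - 1%:M) = (\rank (g - 1%:M)%R + \rank (h - 1%:M)%R)%N.
  by rewrite rg rh rgh.
have [V [U [rV rVU full [Vg Vh Ug Uh]]]] := core_b1 hr.
have rV' : (\rank V + \rank ((g *m h - 1%:M) *m (g *m h - 1%:M))%R = 2 * \rank (g *m h - 1%:M)%R)%N := rV.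
have rgh' : \rank (g *m h - 1%:M)%R = pnorm (modify nu) := rgh.
have rgh2' : (\rank ((g *m h - 1%:M) *m (g *m h - 1%:M))%R + ell_e (modify nu))%N = \rank (g *m h - 1%:M)%R := rgh2.
have rVk : \rank V = k by rewrite /k; lia.
have kn : (k <= n)%N by rewrite -rVk rank_leq_col.
split => //.
apply: (core_b2 (esym (subnKC kn))) rVk _ full Vg Vh Ug Uh gu hu.
lia.
Qed.
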